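(* Let $A$, $S_1$, $S_2$, $Y$ be random variables and suppose: (i) there exist random variables $(S_1(a),U_2(a),S_2(u_2),Y(s_1,s_2,u_2): a,s_1,s_2,u_2)$ with $S_1=S_1(A)$, $S_2=S_2(U_2)$, $Y=Y(S_1,S_2,U_2)$, where $U_2:=U_2(A)$; (ii) there is a random variable $U_1$ such that for all $a,s_1,s_2,u_2$: $(U_1,Y(s_1,s_2,u_2),S_1(a))\perp(U_2(a),S_2(u_2))$, $Y(s_1,s_2,u_2)\perp S_1(a)\mid U_1$, and $U_2(a)\perp S_2(u_2)$; (iii) $A\perp(U_1,U_2(a),S_1(a),S_2(u_2),Y(s_1,s_2,u_2): a,s_1,s_2,u_2)$. Then $(U_2,S_1)\perp S_2(u_2)$ for every $u_2$.
   Context: $\perp$ denotes statistical independence; $A$ is a randomized treatment (cell assignment), $S_1,S_2$ short-term metrics, $Y$ a long-term outcome, $U_1,U_2$ unobserved variables. *)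

(* Defs.v *)
From HB Require Import structures.
From mathcomp Require Import all_boot all_order all_algebra.
From mathcomp Require Import all_classical all_reals all_analysis.
Set Implicit Arguments. Unset Strict Implicit. Unset Printing Implicit Defensive.
Import Order.TTheory GRing.Theory Num.Theory.
Local Open Scope classical_set_scope.
Local Open Scope ring_scope.

Definition preim_sets {d} {Omega : Type} {T : measurableType d} (X : Omega -> T)
  : set (set Omega) := [set X @^-1` B | B in measurable].

Definition preim_sets_fin {Omega : Type} {T : finType} (X : Omega -> T)
  : set (set Omega) := [set X @^-1` B | B in [set: set T]].

(* Independence of (joint) random vectors / families is expressed by taking
   for each side the union of the preimage classes of the components. *)
Definition indep_gen {d} {Omega : measurableType d} {R : realType}
  (P : probability Omega R) (F G : set (set Omega)) : Prop :=
  forall E E', <<s F >> E -> <<s G >> E' ->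
    P (E `&` E') = (P E * P E')%E.

(* Conditional independence of sigma<<F>> and sigma<<G>> given the random
   variable Z: for every event E of sigma<<F>> there is a version g(Z) of
   P(E | Z) (g measurable, g(Z) integrable) which is also a version of
   P(E | sigma<<G>> \/ sigma(Z)), i.e.
     P(E /\ E' /\ Z in D) = \int_{E' /\ Z in D} g(Z) dP
   for all E' in sigma<<G>> and measurable D (it suffices to test on this
   pi-system generating sigma<<G>> \/ sigma(Z)). *)
Definition cond_indep_gen {d} {Omega : measurableType d} {R : realType}
  (P : probability Omega R) (F G : set (set Omega))
  {dz} {TZ : measurableType dz} (Z : Omega -> TZ) : Prop :=
  forall E, <<s F >> E ->
    exists g : TZ -> R,
      [/\ measurable_fun setT g,
          P.-integrable setT (EFin \o (g \o Z)) &
          forall E' D, <<s G >> E' -> measurable D ->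
            P (E `&` E' `&` Z @^-1` D) =
            (\int[P]_(w in E' `&` Z @^-1` D) (g (Z w))%:E)%E].

(* Main.v *)
Require Import Defs.
From HB Require Import structures.
From mathcomp Require Import all_boot all_order all_algebra.
From mathcomp Require Import all_classical all_reals all_analysis.
Import Order.TTheory GRing.Theory Num.Theory.
Local Open Scope classical_set_scope.
Local Open Scope ring_scope.

Section helpers.
Context (R : realType) (d : measure_display) (Omega : measurableType d)
  (P : probability Omega R).
Local Open Scope ereal_scope.

Lemma Pfin {X : set Omega} : measurable X -> P X \is a fin_num.
Proof.
move=> mX; rewrite ge0_fin_numE ?measure_ge0//.
exact: (le_lt_trans (probability_le1 P mX) (ltey _)).
Qed.

Lemma gen_meas (F : set (set Omega)) : (forall E, F E -> measurable E) ->
  forall E, <<s F >> E -> measurable E.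
Proof.
move=> hF E; apply: smallest_sub => //; exact: sigma_algebra_measurable.
Qed.

Lemma genI (T : Type) (F : set (set T)) A B : <<s F >> A -> <<s F >> B ->
  <<s F >> (A `&` B).
Proof.
move=> hA hB.
have -> : A `&` B = setT `\` ((setT `\` A) `|` (setT `\` B)).
  apply/seteqP; split => w /=.
    by move=> [Aw Bw]; split => // -[[_ /(_ Aw)]|[_ /(_ Bw)]].
  move=> [_ H]; split; apply: contrapT => nw; apply: H; [left|right]; by [].
apply: sigma_algebraCD; rewrite -bigcup2E; apply: sigma_algebra_bigcup.
move=> [|[|n]] /=; try exact: sigma_algebraCD.
exact: sigma_algebra0.
Qed.

Lemma half (F : set (set Omega)) (X : set Omega) :
  setI_closed F -> (forall E, F E -> measurable E) -> measurable X ->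
  (forall E, F E -> P (E `&` X) = P E * P X) ->
  forall E, <<s F >> E -> P (E `&` X) = P E * P X.
Proof.
move=> FI Fm mX hF.
suff: <<s F >> `<=` [set E | measurable E /\ P (E `&` X) = P E * P X].
  by move=> H E /H [].
apply: lambda_system_subset => //.
split.
- by [].
- by split => //; rewrite setTI probability_setT mul1e.
- move=> A B BA [mA hA] [mB hB]; split; first exact: measurableD.
  have -> : (A `\` B) `&` X = (A `&` X) `\` (B `&` X).
    by apply/seteqP; split => w /=; [move=> [[? ?] ?]; split => // -[]|move=> [[? ?] H]; split => //; split => // Bw; apply: H].
  rewrite measureD ?measurableI// ?ltey_eq ?Pfin ?measurableI//.
  rewrite measureD ?ltey_eq ?Pfin//.
  have -> : A `&` X `&` (B `&` X) = B `&` X.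
    by apply/seteqP; split => w /=; [move=> [_ ?]|move=> [? ?]; split => //; split => //; exact: BA].
  have -> : A `&` B = B by apply/seteqP; split => w /=; [move=> [_ ?]|move=> ?; split => //; exact: BA].
  rewrite muleBl ?Pfin//; try exact: measurableI.
  - by congr (_ - _); [exact: hA|exact: hB].
  - by apply: fin_num_adde_defr; exact: Pfin.
  - exact: (@measurableI _ Omega _ _ mA mX).
  - exact: (@measurableI _ Omega _ _ mB mX).
  - exact: (@measurableI _ Omega _ _ mA mX).
- move=> G ndG hG; have mG i : measurable (G i) by case: (hG i).
  have mU : measurable (\bigcup_i G i) by exact: bigcup_measurable.
  split => //.
  have c1 := @nondecreasing_cvg_mu _ _ _ P _ mG mU ndG.
  have mGX i : measurable (G i `&` X) by exact: measurableI.
  have ndGX : nondecreasing_seq (fun i => G i `&` X).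
    by move=> m n mn; apply/subsetPset; apply: setSI; apply/subsetPset; exact: ndG.
  have c2 := @nondecreasing_cvg_mu _ _ _ P _ mGX (bigcup_measurable (fun i _ => mGX i)) ndGX.
  rewrite setI_bigcupl.
  have c3 := cvgeZr (Pfin mX) c1.
  have e : (fun n => (P \o G) n * P X) = P \o (fun i => G i `&` X).
    by apply: funext => n /=; case: (hG n) => _ ->.
  rewrite e in c3.
  exact: (cvg_unique _ c2 c3).
- by move=> E FE; split; [exact: Fm|exact: hF].
Qed.

Lemma indep_pi (F G : set (set Omega)) :
  setI_closed F -> setI_closed G ->
  (forall E, F E -> measurable E) -> (forall E, G E -> measurable E) ->
  (forall E E', F E -> G E' -> P (E `&` E') = P E * P E') ->
  indep_gen P F G.
Proof.
move=> FI GI Fm Gm h E E' hE hE'.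
rewrite setIC muleC.
apply: (@half G E GI Gm (gen_meas _ Fm _ hE)) => // E2 GE2.
rewrite setIC muleC.
apply: (@half F E2 FI Fm (Gm _ GE2)) => // E1 FE1.
exact: h.
Qed.

End helpers.

Theorem lemma1
  (R : realType) (d : measure_display) (Omega : measurableType d)
  (P : probability Omega R)
  (TA : finType)
  (d1 : measure_display) (T1 : measurableType d1)
  (d2 : measure_display) (T2 : measurableType d2)
  (dy : measure_display) (TY : measurableType dy)
  (du1 : measure_display) (TU1 : measurableType du1)
  (du2 : measure_display) (TU2 : measurableType du2)
  (* observed variables *)
  (A : Omega -> TA) (S1 : Omega -> T1) (S2 : Omega -> T2) (Y : Omega -> TY)
  (* potential outcomes / latent variables *)
  (S1p : TA -> Omega -> T1) (U2p : TA -> Omega -> TU2)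
  (S2p : TU2 -> Omega -> T2) (Yp : T1 -> T2 -> TU2 -> Omega -> TY)
  (U1 : Omega -> TU1)
  (* all of them are random variables *)
  (mA : forall a, measurable (A @^-1` [set a]))
  (mS1 : measurable_fun setT S1) (mS2 : measurable_fun setT S2)
  (mY : measurable_fun setT Y)
  (mS1p : forall a, measurable_fun setT (S1p a))
  (mU2p : forall a, measurable_fun setT (U2p a))
  (mS2p : forall u2, measurable_fun setT (S2p u2))
  (mYp : forall s1 s2 u2, measurable_fun setT (Yp s1 s2 u2))
  (mU1 : measurable_fun setT U1)
  (* (i) consistency, with U2 := U2(A) *)
  (hS1 : S1 = fun w => S1p (A w) w)
  (hS2 : S2 = fun w => S2p (U2p (A w) w) w)
  (hY : Y = fun w => Yp (S1 w) (S2 w) (U2p (A w) w) w)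
  (* (ii) *)
  (h2a : forall a s1 s2 u2,
     indep_gen P
       (preim_sets U1 `|` preim_sets (Yp s1 s2 u2) `|` preim_sets (S1p a))
       (preim_sets (U2p a) `|` preim_sets (S2p u2)))
  (h2b : forall a s1 s2 u2,
     cond_indep_gen P (preim_sets (Yp s1 s2 u2)) (preim_sets (S1p a)) U1)
  (h2c : forall a u2,
     indep_gen P (preim_sets (U2p a)) (preim_sets (S2p u2)))
  (* (iii) A independent of the whole family *)
  (h3 : indep_gen P (preim_sets_fin A)
     ([set E | (exists a, preim_sets (U2p a) E) \/ (exists a, preim_sets (S1p a) E)
              \/ (exists u2, preim_sets (S2p u2) E)
              \/ (exists s1 s2 u2, preim_sets (Yp s1 s2 u2) E)]
      `|` preim_sets U1)) :
  forall u2,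
    indep_gen P
      (preim_sets (fun w => U2p (A w) w) `|` preim_sets S1)
      (preim_sets (S2p u2)).
Proof.
move=> u2.
subst S1.
set S := fun w => S1p (A w) w.
set U := fun w => U2p (A w) w.
have pre : forall (dd : measure_display) (TT : measurableType dd) (f : Omega -> TT) B,
    measurable_fun setT f -> measurable B -> measurable (f @^-1` B).
  by move=> dd TT f B mf mB; rewrite -[_ @^-1` _]setTI; exact: mf.
have mUB B : measurable B -> measurable (U @^-1` B).
  move=> mB.
  have -> : U @^-1` B = \bigcup_(a in [set: TA]) (A @^-1` [set a] `&` U2p a @^-1` B).
    apply/seteqP; split => w /=.
      by move=> Bw; exists (A w) => //.
    by move=> [a _ [/= <- ?]].
  apply: fin_bigcup_measurable; first exact: finite_finset.
  by move=> a _; apply: measurableI; [exact: mA|exact: pre].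
have mSC C : measurable C -> measurable (S @^-1` C) by move=> mC; exact: pre.
have [w0 _] : exists w : Omega, True.
  apply: contrapT => nw.
  have e : [set: Omega] = set0 by apply/seteqP; split => // w _; apply: nw; exists w.
  have := probability_setT P; rewrite e measure0 => /esym/eqP.
  by rewrite onee_eq0.
pose s1 := S w0. pose s2 := S2 w0.
have part X : measurable X ->
    P X = (\sum_(a \in [set: TA]) P (X `&` A @^-1` [set a]))%E.
  move=> mX.
  rewrite -measure_fin_bigcup; first last.
  - by move=> a _; apply: measurableI => //; exact: mA.
  - by move=> i j _ _ [w [[_ Hi] [_ Hj]]]; rewrite -Hi -Hj.
  - exact: finite_finset.
  congr (P _); apply/seteqP; split => w /=.
    by move=> Xw; exists (A w).
  by move=> [a _ [? _]].
pose fam := [set E | (exists a, preim_sets (U2p a) E) \/ (exists a, preim_sets (S1p a) E)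
              \/ (exists u2, preim_sets (S2p u2) E)
              \/ (exists s1 s2 u2, preim_sets (Yp s1 s2 u2) E)]
      `|` preim_sets U1.
have h3' a Z : <<s fam >> Z -> P (A @^-1` [set a] `&` Z) = (P (A @^-1` [set a]) * P Z)%E.
  move=> hZ; apply: h3 => //; apply: sub_sigma_algebra.
  by exists [set a].
pose Rect := [set E | exists B C, [/\ measurable B, measurable C &
                E = U @^-1` B `&` S @^-1` C]].
have hR : indep_gen P Rect (preim_sets (S2p u2)).
  apply: indep_pi.
  - move=> E1 E2 [B1 [C1 [mB1 mC1 ->]]] [B2 [C2 [mB2 mC2 ->]]].
    exists (B1 `&` B2), (C1 `&` C2); split; try exact: measurableI.
    by rewrite !preimage_setI setIACA.
  - move=> E1 E2 [B1 mB1 <-] [B2 mB2 <-].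
    exists (B1 `&` B2); first exact: measurableI.
    by rewrite preimage_setI.
  - by move=> E [B [C [mB mC ->]]]; apply: measurableI; [exact: mUB|exact: mSC].
  - by move=> E [B mB <-]; exact: pre.
  move=> E E' [B [C [mB mC ->]]] [D mD <-].
  rewrite (part (U @^-1` B `&` S @^-1` C `&` S2p u2 @^-1` D)); last first.
    by apply: measurableI; [apply: measurableI; [exact: mUB|exact: mSC]|exact: pre].
  rewrite (part (U @^-1` B `&` S @^-1` C)); last first.
    by apply: measurableI; [exact: mUB|exact: mSC].
  rewrite ge0_mule_fsuml; last by move=> a; exact: measure_ge0.
  apply: eq_fsbigr => a _.
  set Ua := U2p a @^-1` B. set Sa := S1p a @^-1` C. set Dd := S2p u2 @^-1` D.
  have e1 : U @^-1` B `&` S @^-1` C `&` Dd `&` A @^-1` [set a] =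
      A @^-1` [set a] `&` (Ua `&` Sa `&` Dd).
    apply/seteqP; split => w /=.
      by move=> [[[h1 h2] h5] h4]; rewrite /U /S h4 in h1 h2; split.
    by move=> [h4 [[h1 h2] h5]]; rewrite /U /S h4; split.
  have e2 : U @^-1` B `&` S @^-1` C `&` A @^-1` [set a] =
      A @^-1` [set a] `&` (Ua `&` Sa).
    apply/seteqP; split => w /=.
      by move=> [[h1 h2] h4]; rewrite /U /S h4 in h1 h2; split.
    by move=> [h4 [h1 h2]]; rewrite /U /S h4; split.
  have fUa : <<s fam >> Ua by apply: sub_sigma_algebra; left; left; exists a; exists B.
  have fSa : <<s fam >> Sa by apply: sub_sigma_algebra; left; right; left; exists a; exists C.
  have fDd : <<s fam >> Dd by apply: sub_sigma_algebra; left; right; right; left; exists u2; exists D.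
  rewrite e1 e2 h3'; last by apply: genI => //; exact: genI.
  rewrite h3'; last exact: genI.
  rewrite -muleA; congr (_ * _)%E.
  have k1 : P (Sa `&` (Ua `&` Dd)) = (P Sa * P (Ua `&` Dd))%E.
    apply: (h2a a s1 s2 u2).
      by apply: sub_sigma_algebra; right; exists C.
    by apply: genI; apply: sub_sigma_algebra; [left; exists B|right; exists D].
  have k2 : P (Ua `&` Dd) = (P Ua * P Dd)%E.
    by apply: (h2c a u2); apply: sub_sigma_algebra; [exists B|exists D].
  have k3 : P (Sa `&` Ua) = (P Sa * P Ua)%E.
    by apply: (h2a a s1 s2 u2); apply: sub_sigma_algebra; [right; exists C|left; exists B].
  by rewrite -setIA setICA k1 k2 [Ua `&` Sa]setIC k3 muleA.
move=> E E' hE hE'; apply: hR => //.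
apply: (@sub_sigma_algebra2 _ setT Rect) hE.
move=> E0 [[B mB <-]|[C mC <-]].
  exists B, setT; split => //; by rewrite preimage_setT setIT.
exists setT, C; split => //; by rewrite preimage_setT setTI.
Qed.
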